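(* Let $\lambda\in\{1,2\}$ and let $u,t,v,w$ be integers such that: $(uw,t)$ satisfies $S_{\lambda,1}$ and $(uw)\cdot v=t^3+t^{\lambda}+1$ (so $uw,t,v$ are consecutive terms of $\langle uw,t\rangle_{S_{\lambda,1}}=\langle t,v\rangle_{S_{2,\lambda}}$); $(vw,t)$ satisfies $S_{\lambda,1}$ (so $vw,t,u$ are consecutive terms of $\langle vw,t\rangle_{S_{\lambda,1}}=\langle t,u\rangle_{S_{2,\lambda}}$); $|t|$ is a prime; and $t\nmid (u-v)$. Then $(-uv,t)$ satisfies $S_{\lambda,1}$, so $-uv,t,-w$ are, in that order, three consecutive terms of a third 4-chain $\langle -uv,t\rangle_{S_{\lambda,1}}=\langle t,-w\rangle_{S_{2,\lambda}}$.
   Context: For $\lambda_a,\lambda_b\in\{1,2\}$, a pair of integers $(x,y)$ satisfies the system $S_{\lambda_a,\lambda_b}$ if $x\mid y^3+y^{\lambda_a}+1$ and $y\mid x^3+x^{\lambda_b}+1$. For such a pair, $\langle x,y\rangle_{S_{\lambda_a,\lambda_b}}$ denotes the bi-infinite integer sequence $(u_n)$ with $u_0=x$, $u_1=y$ and $u_{n-1}u_{n+1}=u_n^3+u_n^{e_n}+1$ for all $n$, where $e_n$ has period 4 with $(e_0,e_1,e_2,e_3)=(\lambda_b,\lambda_a,3-\lambda_b,3-\lambda_a)$; sequences are identified up to shift and reversal of indices. ''$u,t,s$, in that order, are three consecutive terms of $\langle u,t\rangle_{S_{\lambda_a,\lambda_b}}$'' means $(u,t)$ satisfies $S_{\lambda_a,\lambda_b}$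 and $us=t^3+t^{\lambda_a}+1$. *)

(* Defs.v *)
From Stdlib Require Import ZArith Znumtheory.
Open Scope Z_scope.

Definition satS (la lb x y : Z) : Prop :=
  (x | y ^ 3 + y ^ la + 1) /\ (y | x ^ 3 + x ^ lb + 1).

(* "u, t, s, in that order, are three consecutive terms of <u,t>_{S_{la,lb}}":
   (u,t) satisfies S_{la,lb} and u*s = t^3 + t^la + 1. *)
Definition consec3 (la lb u t s : Z) : Prop :=
  satS la lb u t /\ u * s = t ^ 3 + t ^ la + 1.

(* Main.v *)
Require Import Defs.
From Stdlib Require Import ZArith Znumtheory Lia.
Open Scope Z_scope.

Lemma dv2 (t x y k l : Z) : (t | x) -> (t | y) -> (t | k * x + l * y).
Proof. intros. apply Z.divide_add_r; apply Z.divide_mul_r; auto. Qed.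

Lemma primediv (t x y : Z) : prime (Z.abs t) -> (t | x * y) -> (t | x) \/ (t | y).
Proof.
  intros P H. apply Z.divide_abs_l in H.
  destruct (prime_mult _ P _ _ H); [left|right]; apply Z.divide_abs_l; auto.
Qed.

Theorem theorem13 (lam u t v w : Z) :
  (lam = 1 \/ lam = 2) ->
  satS lam 1 (u * w) t ->
  (u * w) * v = t ^ 3 + t ^ lam + 1 ->
  satS lam 1 (v * w) t ->
  prime (Z.abs t) ->
  ~ (t | u - v) ->
  satS lam 1 (- (u * v)) t /\ consec3 lam 1 (- (u * v)) t (- w).
Proof.
  intros Hl [_ HA] HN [_ HB] P Huv.
  rewrite Z.pow_1_r in HA, HB.
  set (a := u*w) in *. set (b := v*w) in *.
  assert (He : (t | u*v*w - 1)).
  { destruct Hl; subst lam.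
    - exists (t^2 + 1). replace (u*v*w) with (a*v) by (unfold a; ring). rewrite HN. ring.
    - exists (t^2 + t). replace (u*v*w) with (a*v) by (unfold a; ring). rewrite HN. ring. }
  assert (Hw : ~ (t | w)).
  { intro Hw. assert (H1 : (t | 1)).
    { replace 1 with ((u*v)*w + (-1)*(u*v*w-1)) by ring. apply dv2; auto. }
    apply Z.divide_abs_l in H1. apply Z.divide_1_r in H1.
    destruct P as [P _]. lia. }
  assert (Hab : ~ (t | a - b)).
  { intro H. replace (a-b) with (w*(u-v)) in H by (unfold a, b; ring).
    destruct (primediv _ _ _ P H); auto. }
  set (Q := a^2 + a*b + b^2 + 1).
  assert (HQ : (t | Q)).
  { assert (H : (t | (a-b)*Q)).
    { replace ((a-b)*Q) with (1*(a^3+a+1) + (-1)*(b^3+b+1)) by (unfold Q; ring).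
      apply dv2; auto. }
    destruct (primediv _ _ _ P H); tauto. }
  set (R := 1 - a*b*(a+b)).
  assert (HR : (t | R)).
  { replace R with (1*(a^3+a+1) + (-a)*Q) by (unfold R, Q; ring). apply dv2; auto. }
  set (S := w*(u+v) - u*v).
  assert (HS : (t | S)).
  { assert (H : (t | w*S)).
    { replace (w*S) with ((-(w^2*(u+v)) - 1)*(u*v*w-1) + (-1)*R)
        by (unfold S, R, a, b; ring).
      apply dv2; auto. }
    destruct (primediv _ _ _ P H); tauto. }
  assert (HX : (t | (- (u*v))^3 + (- (u*v))^1 + 1)).
  { rewrite Z.pow_1_r.
    set (y := - (u*v)). set (c := -(a+b)).
    replace (y^3 + y + 1) with (c*Q + 1*R + (y^2+y*c+c^2+1)*S)
      by (unfold y, c, Q, R, S, a, b; ring).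
    apply Z.divide_add_r; [apply dv2; auto|apply Z.divide_mul_r; auto]. }
  assert (HD : (- (u*v) | t^3 + t^lam + 1)).
  { exists (-w). rewrite <- HN. unfold a. ring. }
  split; [split; auto|]. split; [split; auto|]. rewrite <- HN. unfold a. ring.
Qed.
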